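(* Let $\mathcal R_1\subseteq\mathcal R$ be a finite collection with the property: whenever $R,R'\in\mathcal R_1$ are distinct, $R\cap R'\ne\emptyset$ and $L(R)\le L(R')$, then $\mathrm{slope}(R)\not\supseteq\mathrm{slope}(R')$. Then for every $x\in[0,1)$ and every $y\in\mathbb R$, $$\#\{R\in\mathcal R_1:(x,y)\in R\}\ \le\ g(x)\ \le\ \frac1\delta\,h(x).$$
   Context: Dyadic model. Fix $0<\delta\le1$ and $w=2^{-m}$ for an integer $m\ge1$. All dyadic intervals are half-open. For $k\ge0$, $S_k$ is the set of dyadic subintervals of $[0,1)$ of length $2^{-k}$ (slopes); $c_s$ is the center of $s$. Let $u:[0,1)\to S_m$ be measurable. Let $\mathcal D$ be the dyadic intervals $I\subseteq[0,1)$ with $|I|\ge w$, $k(I)=\log_2(|I|/w)$, $\mathrm{Pop}_I(s)=\frac1{|I|}|\{x\in I:u(x)\subseteq s\}|$, $S(I)=\{s\in S_{k(I)}:\mathrm{Pop}_I(s)\ge\delta\}$. The parallelogram $P(I,s,b)=\{(x,y):x\in I,\ b\le y-c_sx<b+w\}$ ($I\in\mathcal D$, $s\in S_{k(I)}$, $b\in\mathbb R$) has $\mathrm{int}(P)=I$, $\mathrm{slope}(P)=s$, $L(P)=|I|$; $\mathcal R$ is the collection of these with $s\in S(I)$. Define $T(I)$ for $I\in\mathcal D$ recursively from larger to smaller intervals: $T([0,1))=S([0,1))$, and $T(I)=\{s\in S(I):$ there is no $K\in\mathcal D$ with $K\supsetneq I$ and $s'\in T(K)$ with $s\supseteq s'\}$.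 For $s\in T(I)$ let $\mu_I^s=|\{x\in I:u(x)\subseteq s\}|$, and let $\mu_I=\sum_{s\in T(I)}\mu_I^s$. Define $g(x)=\sum_{I\in\mathcal D}\chi_I(x)\,\#T(I)$ and $h(x)=\sum_{I\in\mathcal D}\chi_I(x)\frac{\mu_I}{|I|}$. *)

(* Defs.v *)
From Stdlib Require Import Reals List ClassicalEpsilon.
Open Scope R_scope.

Definition rsum (n : nat) (f : nat -> R) : R :=
  fold_right Rplus 0 (map f (seq 0 n)).

Definition ind (P : Prop) : R :=
  if excluded_middle_informative P then 1 else 0.

Definition decb (P : Prop) : bool :=
  if excluded_middle_informative P then true else false.

Definition cnt (n : nat) (P : nat -> Prop) : nat :=
  length (filter (fun j => decb (P j)) (seq 0 n)).

(* the dyadic interval of level k and index j is [j 2^-k, (j+1) 2^-k);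
   it is a subinterval of [0,1) iff j < 2^k *)
Definition dyin (k j : nat) (x : R) : Prop :=
  INR j / 2 ^ k <= x < (INR j + 1) / 2 ^ k.

Definition dyadic_ok (k j : nat) : Prop := (j < 2 ^ k)%nat.

Definition dsub (k j k' j' : nat) : Prop :=
  forall x : R, dyin k' j' x -> dyin k j x.

Definition center (k j : nat) : R := (INR j + / 2) / 2 ^ k.

Definition dlen (n : nat) : R := / 2 ^ n.

(* ---------- the model ----------
   Parameters: m (w = 2^-m), delta, and the distribution of u:
   a c t = | { x in cell c : u(x) = t } |, where the cell c is the dyadic
   interval of level m and index c, and t is the slope of S_m with index t.
   An interval I in D is (n,i) with n <= m, i < 2^n; |I| = 2^-n, k(I) = m-n. *)

Definition wid (m : nat) : R := / 2 ^ m.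

(* | { x in I : u(x) ⊆ s } |  for I = (n,i), s = (k,j) *)
Definition musub (m : nat) (a : nat -> nat -> R) (n i k j : nat) : R :=
  rsum (2 ^ m) (fun c => rsum (2 ^ m) (fun t =>
     ind (dsub n i m c /\ dsub k j m t) * a c t)).

Definition Pop (m : nat) (a : nat -> nat -> R) (n i k j : nat) : R :=
  / dlen n * musub m a n i k j.

(* s = (m-n, j) belongs to S(I), I = (n,i) *)
Definition inS (m : nat) (delta : R) (a : nat -> nat -> R) (n i j : nat) : Prop :=
  dyadic_ok (m - n) j /\ delta <= Pop m a n i (m - n) j.

(* Tpre ... p n' i j  : slope j is in T(I) for I = (n',i), valid for levels n' < p *)
Fixpoint Tpre (m : nat) (delta : R) (a : nat -> nat -> R) (p : nat)
  : nat -> nat -> nat -> Prop :=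
  match p with
  | O => fun _ _ _ => False
  | S q => fun n' i j =>
      if Nat.ltb n' q then Tpre m delta a q n' i j
      else if Nat.eqb n' q then
        inS m delta a q i j /\
        ~ (exists n'' i'' j'',
             (n'' < q)%nat /\ dyadic_ok n'' i'' /\ dsub n'' i'' q i /\
             Tpre m delta a q n'' i'' j'' /\
             dsub (m - q) j (m - n'') j'')
      else False
  end.

Definition inT (m : nat) (delta : R) (a : nat -> nat -> R) (n i j : nat) : Prop :=
  Tpre m delta a (S n) n i j.

Definition cardT m delta a n i : nat := cnt (2 ^ (m - n)) (inT m delta a n i).

Definition muI m delta a n i : R :=
  rsum (2 ^ (m - n)) (fun j => ind (inT m delta a n i j) * musub m a n i (m - n) j).

Definition gfun m delta a (x : R) : R :=
  rsum (S m) (fun n => rsum (2 ^ n) (fun i =>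
     ind (dyin n i x) * INR (cardT m delta a n i))).

Definition hfun m delta a (x : R) : R :=
  rsum (S m) (fun n => rsum (2 ^ n) (fun i =>
     ind (dyin n i x) * (muI m delta a n i / dlen n))).

(* P(I,s,b) with I = (pn, pi), s = (m - pn, pj) *)
Record Par := mkPar { pn : nat; pi : nat; pj : nat; pb : R }.

Definition inRR m delta a (P : Par) : Prop :=
  (pn P <= m)%nat /\ dyadic_ok (pn P) (pi P) /\ inS m delta a (pn P) (pi P) (pj P).

Definition inPar (m : nat) (P : Par) (x y : R) : Prop :=
  dyin (pn P) (pi P) x /\
  pb P <= y - center (m - pn P) (pj P) * x < pb P + wid m.

Definition Lpar (P : Par) : R := dlen (pn P).

Definition slope_sup (m : nat) (P P' : Par) : Prop :=
  dsub (m - pn P) (pj P) (m - pn P') (pj P').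

Definition count_at (m : nat) (R1 : list Par) (x y : R) : nat :=
  length (filter (fun P => decb (inPar m P x y)) R1).

(* Main.v *)
Require Import Defs.
From Stdlib Require Import Reals List Lra Lia Classical ClassicalEpsilon.
Open Scope R_scope.
Import Defs.

Lemma fr_le (l : list nat) f g : (forall k, In k l -> f k <= g k) ->
  fold_right Rplus 0 (map f l) <= fold_right Rplus 0 (map g l).
Proof. induction l; simpl; intros H. lra. apply Rplus_le_compat; auto. Qed.

Lemma fr_scal (l : list nat) c f :
  fold_right Rplus 0 (map (fun k => c * f k) l) = c * fold_right Rplus 0 (map f l).
Proof. induction l; simpl. ring. rewrite IHl; ring. Qed.

Lemma INR_len_filter (l : list nat) (P : nat -> Prop) :
  INR (length (filter (fun j => decb (P j)) l)) = fold_right Rplus 0 (map (fun j => ind (P j)) l).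
Proof.
  induction l as [|b l IHl]; simpl. reflexivity.
  unfold decb at 1, ind at 1. destruct (excluded_middle_informative (P b)); cbn [filter length].
  - rewrite S_INR, IHl; ring.
  - rewrite IHl; ring.
Qed.

Lemma INR_len_concat {A} (F : nat -> list A) l :
  INR (length (concat (map F l))) = fold_right Rplus 0 (map (fun k => INR (length (F k))) l).
Proof. induction l; cbn [map concat fold_right]; [reflexivity|]. rewrite length_app, plus_INR, IHl. reflexivity. Qed.

Lemma Tpre_stable m delta a : forall p n' i j, (n' < p)%nat ->
  Tpre m delta a p n' i j <-> inT m delta a n' i j.
Proof.
  induction p; intros n' i j H; [lia|].
  destruct (Nat.lt_ge_cases n' p) as [Hl|Hg].
  - rewrite <- (IHp n' i j Hl). cbn [Tpre]. apply Nat.ltb_lt in Hl. rewrite Hl. tauto.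
  - assert (n' = p) by lia. subst. unfold inT. tauto.
Qed.

Lemma inT_unfold m delta a n i j : inT m delta a n i j <-> inS m delta a n i j /\
  ~ (exists n'' i'' j'', (n'' < n)%nat /\ dyadic_ok n'' i'' /\ dsub n'' i'' n i /\
       Tpre m delta a n n'' i'' j'' /\ dsub (m - n) j (m - n'') j'').
Proof. unfold inT. cbn [Tpre]. rewrite Nat.ltb_irrefl, Nat.eqb_refl. tauto. Qed.

Lemma pow2_pos k : 0 < 2 ^ k.
Proof. apply pow_lt; lra. Qed.

Lemma dl a b c : 0 < b -> a / b <= c -> a <= c * b.
Proof. intros Hb H. replace a with (a/b*b) by (field; lra). apply Rmult_le_compat_r; lra. Qed.
Lemma dl2 a b c : 0 < b -> c < a / b -> c * b < a.
Proof. intros Hb H. replace a with (a/b*b) by (field; lra). apply Rmult_lt_compat_r; lra. Qed.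
Lemma ld a b c : 0 < b -> a <= c * b -> a / b <= c.
Proof. intros Hb H. replace c with (c*b/b) by (field; lra). unfold Rdiv.
  apply Rmult_le_compat_r; [left; apply Rinv_0_lt_compat|]; lra. Qed.
Lemma ld2 a b c : 0 < b -> c * b < a -> c < a / b.
Proof. intros Hb H. replace c with (c*b/b) by (field; lra). unfold Rdiv.
  apply Rmult_lt_compat_r; [apply Rinv_0_lt_compat|]; lra. Qed.

Lemma dyin_nest k j k' j' z : (k <= k')%nat -> dyin k j z -> dyin k' j' z -> dsub k j k' j'.
Proof.
  intros Hk [H1 H2] [H3 H4] w [H5 H6].
  set (d := (k' - k)%nat).
  assert (E : 2 ^ k' = 2 ^ k * 2 ^ d) by (rewrite <- pow_add; f_equal; unfold d; lia).
  pose proof (pow2_pos k) as Pk; pose proof (pow2_pos d) as Pd.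
  apply dl in H1; apply dl2 in H2; apply dl in H3; apply dl2 in H4;
  apply dl in H5; apply dl2 in H6; try apply pow2_pos.
  rewrite E in H3, H4, H5, H6.
  assert (ED : 2 ^ d = INR (2 ^ d)) by (rewrite pow_INR; reflexivity).
  rewrite ED in *.
  assert (A1 : (j * 2 ^ d < j' + 1)%nat).
  { apply INR_lt. rewrite mult_INR, plus_INR. simpl (INR 1). nra. }
  assert (A2 : (j' < (j + 1) * 2 ^ d)%nat).
  { apply INR_lt. rewrite mult_INR, plus_INR. simpl (INR 1). nra. }
  assert (B1 : INR j * INR (2^d) <= INR j') by (rewrite <- mult_INR; apply le_INR; lia).
  assert (B2 : INR j' + 1 <= (INR j + 1) * INR (2^d)).
  { replace (INR j' + 1) with (INR (j'+1)) by (rewrite plus_INR; reflexivity).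
    replace (INR j + 1) with (INR (j+1)) by (rewrite plus_INR; reflexivity).
    rewrite <- mult_INR; apply le_INR; lia. }
  split; [apply ld|apply ld2]; auto; nra.
Qed.

Lemma dyin_self k j : dyin k j (INR j / 2 ^ k).
Proof. pose proof (pow2_pos k). split; [lra|]. unfold Rdiv.
  apply Rmult_lt_compat_r; [apply Rinv_0_lt_compat; lra|lra]. Qed.

Lemma Lpar_le P P' : Lpar P <= Lpar P' -> (pn P' <= pn P)%nat.
Proof.
  unfold Lpar, dlen. intros H. destruct (Nat.le_gt_cases (pn P') (pn P)) as [|Hl]; auto.
  exfalso. assert (2 ^ pn P < 2 ^ pn P') by (apply Rlt_pow; [lra|lia]).
  pose proof (pow2_pos (pn P)).
  assert (/ 2 ^ pn P' < / 2 ^ pn P) by (apply Rinv_lt_contravar; nra). lra.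
Qed.

Lemma nodup_map_inj {A B} (f : A -> B) l : NoDup l ->
  (forall x y, In x l -> In y l -> f x = f y -> x = y) -> NoDup (map f l).
Proof.
  induction l as [|x l IH]; intros Hn Hi; simpl; constructor.
  - intros Hin. apply in_map_iff in Hin. destruct Hin as [y [E Hy]].
    inversion Hn; subst. assert (y = x) by (apply Hi; simpl; auto). subst; contradiction.
  - inversion Hn; subst. apply IH; auto. intros; apply Hi; simpl; auto.
Qed.

Lemma second m delta a x (Hd0 : 0 < delta) :
  gfun m delta a x <= / delta * hfun m delta a x.
Proof.
  unfold gfun, hfun, rsum. rewrite <- fr_scal. apply fr_le; intros n Hn.
  rewrite <- fr_scal. apply fr_le; intros i Hi.
  assert (K : INR (cardT m delta a n i) <= / delta * (muI m delta a n i / dlen n)).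
  { unfold cardT, cnt, muI, rsum, dlen. rewrite INR_len_filter.
    assert (K : fold_right Rplus 0 (map (fun j => delta * ind (inT m delta a n i j)) (seq 0 (2 ^ (m - n))))
       <= fold_right Rplus 0 (map (fun j => 2 ^ n * (ind (inT m delta a n i j) * musub m a n i (m - n) j)) (seq 0 (2 ^ (m - n))))).
    { apply fr_le. intros j Hj. unfold ind; destruct excluded_middle_informative as [HT|HT]; [|lra].
      apply inT_unfold in HT. destruct HT as [[_ HS] _]. unfold Pop, dlen in HS.
      rewrite Rinv_inv in HS. nra. }
    rewrite !fr_scal in K. unfold Rdiv. rewrite Rinv_inv.
    apply Rmult_le_reg_l with delta; [lra|]. rewrite <- Rmult_assoc, Rinv_r, Rmult_1_l; [nra|lra]. }
  unfold ind; destruct excluded_middle_informative.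
  - rewrite !Rmult_1_l; exact K.
  - rewrite !Rmult_0_l, Rmult_0_r; lra.
Qed.

Definition Mlist m delta a x : list (nat * nat * nat) :=
  concat (map (fun n => concat (map (fun i =>
    if decb (dyin n i x) then map (fun j => (n, i, j))
       (filter (fun j => decb (inT m delta a n i j)) (seq 0 (2 ^ (m - n))))
    else nil) (seq 0 (2 ^ n)))) (seq 0 (S m))).

Lemma Mlist_len m delta a x : INR (length (Mlist m delta a x)) = gfun m delta a x.
Proof.
  unfold Mlist, gfun, rsum. rewrite INR_len_concat. f_equal. apply map_ext; intro n.
  rewrite INR_len_concat. f_equal. apply map_ext; intro i.
  unfold cardT, cnt. unfold decb at 1, ind.
  destruct (excluded_middle_informative (dyin n i x)).
  - rewrite length_map. ring.
  - simpl. ring.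
Qed.

Definition Rel m delta a x (P : Par) (q : nat * nat * nat) : Prop :=
  (fst (fst q) <= m)%nat /\ (snd (fst q) < 2 ^ fst (fst q))%nat /\ dyin (fst (fst q)) (snd (fst q)) x /\
  (snd q < 2 ^ (m - fst (fst q)))%nat /\ inT m delta a (fst (fst q)) (snd (fst q)) (snd q) /\
  dsub (m - pn P) (pj P) (m - fst (fst q)) (snd q).

Lemma Rel_in m delta a x P q : Rel m delta a x P q -> In q (Mlist m delta a x).
Proof.
  destruct q as [[n0 i0] j0]. unfold Rel; simpl. intros (H1 & H2 & H3 & H4 & H5 & _).
  unfold Mlist. apply in_concat. eexists; split.
  { apply in_map_iff. exists n0. split; [reflexivity| apply in_seq; lia]. }
  apply in_concat. eexists; split.
  { apply in_map_iff. exists i0. split; [reflexivity| apply in_seq; lia]. }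
  unfold decb at 1; destruct (excluded_middle_informative (dyin n0 i0 x)); [|contradiction].
  apply in_map_iff. exists j0. split; [reflexivity|]. apply filter_In. split.
  apply in_seq; lia. unfold decb; destruct (excluded_middle_informative _); [reflexivity|contradiction].
Qed.

Lemma dsub_refl k j : dsub k j k j.
Proof. intros w H; exact H. Qed.

Lemma Rel_ex m delta a x y P : inRR m delta a P -> inPar m P x y ->
  exists q, Rel m delta a x P q.
Proof.
  intros (Hn & Hi & HS) (Hx & _).
  destruct (classic (inT m delta a (pn P) (pi P) (pj P))) as [HT|HT].
  - exists (pn P, pi P, pj P). unfold Rel; simpl. destruct HS as [HS _].
    refine (conj Hn (conj Hi (conj Hx (conj HS (conj HT (dsub_refl _ _)))))).
  - assert (E : exists n'' i'' j'', (n'' < pn P)%nat /\ dyadic_ok n'' i'' /\ dsub n'' i'' (pn P) (pi P) /\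
       Tpre m delta a (pn P) n'' i'' j'' /\ dsub (m - pn P) (pj P) (m - n'') j'').
    { apply NNPP; intro C. apply HT, inT_unfold. auto. }
    destruct E as (n'' & i'' & j'' & E1 & E2 & E3 & E4 & E5).
    apply Tpre_stable in E4; auto.
    exists (n'', i'', j''). unfold Rel; simpl.
    pose proof E4 as E6. apply inT_unfold in E6. destruct E6 as [[E6 _] _].
    refine (conj _ (conj E2 (conj (E3 x Hx) (conj E6 (conj E4 E5))))). lia.
Qed.

Theorem lemma4 (m : nat) (delta : R) (a : nat -> nat -> R)
  (Hm : (1 <= m)%nat) (Hd0 : 0 < delta) (Hd1 : delta <= 1)
  (Ha0 : forall c t, (c < 2 ^ m)%nat -> (t < 2 ^ m)%nat -> 0 <= a c t)
  (Ha1 : forall c, (c < 2 ^ m)%nat -> rsum (2 ^ m) (a c) = wid m)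
  (R1 : list Par)
  (HR1 : forall P, In P R1 -> inRR m delta a P)
  (Hnd : NoDup R1)
  (Hsep : forall P P', In P R1 -> In P' R1 -> P <> P' ->
      (exists x y, inPar m P x y /\ inPar m P' x y) ->
      Lpar P <= Lpar P' -> ~ slope_sup m P P')
  (x y : R) (Hx : 0 <= x < 1) :
  INR (count_at m R1 x y) <= gfun m delta a x /\
  gfun m delta a x <= / delta * hfun m delta a x.
Proof.
  split; [|apply second; exact Hd0].
  rewrite <- Mlist_len. apply le_INR. unfold count_at.
  set (L := filter (fun P => decb (inPar m P x y)) R1).
  assert (HL : forall P, In P L -> In P R1 /\ inPar m P x y).
  { intros P HP. apply filter_In in HP. destruct HP as [H1 H2]. split; auto.
    unfold decb in H2. destruct excluded_middle_informative; [auto|discriminate]. }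
  set (f := fun P => epsilon (inhabits (0%nat, 0%nat, 0%nat)) (Rel m delta a x P)).
  assert (Hf : forall P, In P L -> Rel m delta a x P (f P)).
  { intros P HP. apply epsilon_spec. destruct (HL P HP) as [H1 H2].
    eapply Rel_ex; eauto. }
  rewrite <- (length_map f L). apply NoDup_incl_length.
  - apply nodup_map_inj. apply NoDup_filter; auto.
    intros P P' HP HP' E. apply NNPP; intro Hne.
    pose proof (Hf P HP) as R; pose proof (Hf P' HP') as R'.
    rewrite <- E in R'. set (q := f P) in R, R'.
    destruct (HL P HP) as [I1 X1]; destruct (HL P' HP') as [I2 X2].
    destruct R as (_ & _ & _ & _ & _ & D1). destruct R' as (_ & _ & _ & _ & _ & D2).
    pose proof (dyin_self (m - fst (fst q)) (snd q)) as Z.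
    destruct (Rle_or_lt (Lpar P) (Lpar P')) as [Hle|Hle]; [|apply Rlt_le in Hle].
    + apply (Hsep P P' I1 I2 Hne (ex_intro _ x (ex_intro _ y (conj X1 X2))) Hle).
      apply Lpar_le in Hle. unfold slope_sup.
      eapply dyin_nest; [|apply D1, Z|apply D2, Z]. lia.
    + apply (Hsep P' P I2 I1 (fun e => Hne (eq_sym e)) (ex_intro _ x (ex_intro _ y (conj X2 X1))) Hle).
      apply Lpar_le in Hle. unfold slope_sup.
      eapply dyin_nest; [|apply D2, Z|apply D1, Z]. lia.
  - intros q Hq. apply in_map_iff in Hq. destruct Hq as [P [E HP]]. subst q.
    eapply Rel_in. apply Hf; auto.
Qed.
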